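(* Let $Q$ be a uniquely $2$-divisible commutative A-loop, and define $x\circ y = \big(x^{-1}\backslash (xy^2)\big)^{1/2}$, where $z^{1/2}$ denotes the unique $w\in Q$ with $w^2=z$. Then $(Q,\circ)$ is a (left) Bruck loop, and powers in $Q$ coincide with powers in $(Q,\circ)$.
   Context: A loop is a set with a binary operation and neutral element $1$ in which all left and right translations are bijections; $\mathrm{Inn}(Q)$ is the stabilizer of $1$ in the group generated by all translations. A commutative A-loop is a commutative loop all of whose inner mappings are automorphisms. $x\backslash y$ is the unique $z$ with $xz=y$, $x^{-1}=x\backslash 1$. A loop is uniquely $2$-divisible if $x\mapsto x^2$ is a bijection. A left Bruck loop is a loop satisfying the left Bol identity $x\circ(y\circ(x\circ z)) = (x\circ(y\circ x))\circ z$ and the automorphic inverse property $(x\circ y)^{-1}=x^{-1}\circ y^{-1}$. Powers are $x^n=1L_x^n$ with $L_x$ the left translation of the respective operation. *)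

(* Defs.v *)
From mathcomp Require Import all_boot.
Set Implicit Arguments. Unset Strict Implicit. Unset Printing Implicit Defensive.

Section Loops.
Variable Q : Type.
Implicit Types (mul : Q -> Q -> Q) (e : Q).

Definition is_loop mul e :=
  [/\ forall x, mul e x = x /\ mul x e = x,
      forall x, bijective (mul x) &
      forall x, bijective (fun y => mul y x)].

(* The multiplication group Mlt(Q): the group (of permutations of Q)
   generated by all translations L_x, R_x.  Its elements are the finite
   composites of translations and their inverses; the inverse of L_x is
   given as any g with L_x o g = id (unique since L_x is bijective). *)
Inductive in_mlt mul : (Q -> Q) -> Prop :=
| mlt_id : in_mlt mul (fun y => y)
| mlt_L x f : in_mlt mul f -> in_mlt mul (fun y => mul x (f y))
| mlt_R x f : in_mlt mul f -> in_mlt mul (fun y => mul (f y) x)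
| mlt_Linv x g f : (forall y, mul x (g y) = y) -> in_mlt mul f ->
    in_mlt mul (fun y => g (f y))
| mlt_Rinv x g f : (forall y, mul (g y) x = y) -> in_mlt mul f ->
    in_mlt mul (fun y => g (f y)).

Definition inner_mapping mul e (f : Q -> Q) := in_mlt mul f /\ f e = e.

Definition is_automorphism mul (f : Q -> Q) :=
  bijective f /\ forall x y, f (mul x y) = mul (f x) (f y).

Definition comm_A_loop mul e :=
  [/\ is_loop mul e, commutative mul &
      forall f, inner_mapping mul e f -> is_automorphism mul f].

Definition power mul e (x : Q) (n : nat) : Q := iter n (mul x) e.

Definition uniquely_2_divisible mul e :=
  bijective (fun x => power mul e x 2).

Definition left_Bol (op : Q -> Q -> Q) :=
  forall x y z, op x (op y (op x z)) = op (op x (op y x)) z.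

(* Automorphic inverse property (x o y)^{-1} = x^{-1} o y^{-1}, where
   x^{-1} = x \ e is the unique z with x o z = e. *)
Definition AIP (op : Q -> Q -> Q) e :=
  forall x y xi yi, op x xi = e -> op y yi = e -> op (op x y) (op xi yi) = e.

Definition left_Bruck_loop (op : Q -> Q -> Q) e :=
  [/\ is_loop op e, left_Bol op & AIP op e].

Definition circ mul e (ldiv : Q -> Q -> Q) (sqrt : Q -> Q) (x y : Q) : Q :=
  sqrt (ldiv (ldiv x e) (mul x (power mul e y 2))).

End Loops.

(* Main.v *)
Require Import Defs.
From mathcomp Require Import all_boot.

Theorem lemma3p5 (Q : Type) (mul : Q -> Q -> Q) (e : Q)
    (ldiv : Q -> Q -> Q) (sqrt : Q -> Q) :
  comm_A_loop mul e ->
  uniquely_2_divisible mul e ->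
  (forall x y, mul x (ldiv x y) = y) ->
  (forall z, power mul e (sqrt z) 2 = z) ->
  left_Bruck_loop (circ mul e ldiv sqrt) e /\
  (forall (x : Q) (n : nat),
      power (circ mul e ldiv sqrt) e x n = power mul e x n).
Proof.
move=> [[Hid Hlb Hrb] HC HA] H2 Hdiv Hsq.
have mul1 : forall x, mul e x = x by move=> x; case: (Hid x).
have mulr1 : forall x, mul x e = x by move=> x; case: (Hid x).
have inj : forall x, injective (mul x) by move=> x; exact: bij_inj (Hlb x).
have ldK : forall x y, ldiv x (mul x y) = y by move=> x y; apply: (inj x); rewrite Hdiv.
have aut : forall f, in_mlt mul f -> f e = e -> forall a b, f (mul a b) = mul (f a) (f b).
  by move=> f Hf He; case: (HA f (conj Hf He)).
pose inv := fun x => ldiv x e.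
have mulV : forall x, mul x (inv x) = e by move=> x; exact: Hdiv.
have mulVl : forall x, mul (inv x) x = e by move=> x; rewrite HC mulV.
have ldivv : forall x, ldiv x x = e by move=> x; rewrite -{2}(mulr1 x) ldK.
have ld1 : forall x, ldiv e x = x by move=> x; have := ldK e x; rewrite mul1.
have invK : forall x, inv (inv x) = x by move=> x; apply: (inj (inv x)); rewrite mulV mulVl.
have autinv : forall f, in_mlt mul f -> f e = e -> forall a, f (inv a) = inv (f a).
  move=> f Hf He a; apply: (inj (f a)); rewrite mulV -aut //.
  by rewrite mulV.
have AIP0 : forall x y, mul (mul x y) (mul (inv x) (inv y)) = e.
  move=> x y.
  pose u := mul x y; pose yi := inv y; pose p := mul u yi.
  pose phi := fun t => ldiv p (mul u (mul yi t)).
  have Hphi : in_mlt mul phi.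
    exact: (mlt_Linv (Hdiv p) (mlt_L u (mlt_L yi (mlt_id mul)))).
  have Hphie : phi e = e by rewrite /phi mulr1 ldivv.
  have h1 : phi (mul y x) = u.
    by rewrite /phi (HC y x) -/u (HC yi u) -/p HC ldK.
  have h2 : phi y = ldiv p u by rewrite /phi mulVl mulr1.
  have h3 : phi x = p.
    apply: (inj (ldiv p u)).
    have -> : mul (ldiv p u) p = u by rewrite HC Hdiv.
    by rewrite -h2 -(aut phi Hphi Hphie) h1.
  have h4 := aut phi Hphi Hphie x (inv x).
  rewrite mulV Hphie h3 /phi Hdiv in h4.
  by rewrite (HC (inv x)) -/yi -/u h4.
have AIP : forall x y, inv (mul x y) = mul (inv x) (inv y).
  by move=> x y; apply: (inj (mul x y)); rewrite mulV AIP0.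
have AIPd : forall a b, inv (ldiv a b) = ldiv (inv a) (inv b).
  move=> a b; have E := AIP a (ldiv a b); rewrite Hdiv in E.
  by rewrite E ldK.
have Ainn : forall x, in_mlt mul (fun t => mul (inv x) (mul x t)).
  by move=> x; exact: (mlt_L (inv x) (mlt_L x (mlt_id mul))).
have Ae : forall x, (fun t => mul (inv x) (mul x t)) e = e.
  by move=> x /=; rewrite mulr1 mulVl.
have comm1 : forall x z, mul x (mul (inv x) z) = mul (inv x) (mul x z).
  move=> x z; apply: (inj (inv x)).
  have := aut _ (Ainn x) (Ae x) (inv x) z => /= ->.
  by rewrite mulV mulr1.
have Afix : forall x, mul (inv x) (mul x x) = x.
  move=> x; have := autinv _ (Ainn x) (Ae x) (inv x) => /=.
  by rewrite mulV mulr1 invK => ->.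
have Pstar : forall x w, ldiv (inv x) (mul x w) = mul x (inv (ldiv x (inv w))).
  move=> x w; rewrite AIPd invK; apply: (inj (inv x)).
  by rewrite Hdiv -comm1 Hdiv.
pose P := fun x w => ldiv (inv x) (mul x w).
have PJP : forall x z, P x (inv (P x z)) = inv z.
  move=> x z; rewrite /P (Pstar x (inv _)) invK (Pstar x z) ldK invK.
  by rewrite Hdiv.
have F3 : forall x y z, P x (P y (P x z)) = P (P x y) z.
  move=> x y z.
  pose w := P x y.
  pose h := fun t => ldiv w (P x (mul y t)).
  have Hh : in_mlt mul h.
    exact: (mlt_Linv (Hdiv w) (mlt_Linv (Hdiv (inv x)) (mlt_L x (mlt_L y (mlt_id mul))))).
  have Hhe : h e = e by rewrite /h mulr1 ldivv.
  have key : forall t, P x (mul y t) = mul w (h t) by move=> t; rewrite /h Hdiv.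
  have e1 : P y (P x z) = mul y (inv (ldiv y (inv (P x z)))) := Pstar y (P x z).
  rewrite e1 key (autinv h Hh Hhe) /h (Hdiv y) PJP -/w.
  by rewrite /P Pstar.
have pS : forall x n, power mul e x n.+1 = mul x (power mul e x n) by [].
have fixpow : forall f, in_mlt mul f -> f e = e -> forall x, f x = x ->
    forall n, f (power mul e x n) = power mul e x n.
  move=> f Hf He x Hx; elim=> [|n IH] //.
  by rewrite pS aut // Hx IH.
have pwD : forall x m n, mul (power mul e x m) (power mul e x n) = power mul e x (m + n).
  move=> x; elim=> [|m IH] n; first by rewrite mul1.
  pose q := power mul e x m.
  pose phi := fun t => ldiv (mul x q) (mul x (mul q t)).
  have Hphi : in_mlt mul phi.
    exact: (mlt_Linv (Hdiv (mul x q)) (mlt_L x (mlt_L q (mlt_id mul)))).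
  have Hphie : phi e = e by rewrite /phi mulr1 ldivv.
  have Hpx : phi x = x.
    have E1 := IH 1; rewrite /= mulr1 addn1 -/q in E1.
    rewrite /phi E1 -!pS (pS x m.+1) (HC x).
    by rewrite ldK.
  have := fixpow phi Hphi Hphie x Hpx n.
  rewrite /phi -/q IH -pS -addSn => E.
  by rewrite -E -pS Hdiv.
have Amore : forall x k, mul (inv x) (power mul e x k.+1) = power mul e x k.
  move=> x k; have Hx : (fun t => mul (inv x) (mul x t)) x = x by exact: Afix.
  exact: (fixpow _ (Ainn x) (Ae x) x Hx k).
have Hsq' : forall z, mul (sqrt z) (sqrt z) = z.
  by move=> z; have := Hsq z; rewrite /= mulr1.
have sqK : forall y, sqrt (mul y y) = y.
  move=> y; apply: (bij_inj H2) => /=.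
  by rewrite !mulr1 Hsq'.
have sqrt_inj : forall a b, sqrt a = sqrt b -> a = b.
  by move=> a b Hab; rewrite -(Hsq' a) -(Hsq' b) Hab.
have circE : forall x y, circ mul e ldiv sqrt x y = sqrt (P x (mul y y)).
  by move=> x y; rewrite /circ /= mulr1.
have Po1 : forall x, P x e = mul x x.
  move=> x; have := ldK (inv x) (mul x x); rewrite Afix => E.
  by rewrite /P mulr1.
have ldiv_inj : forall c a b, ldiv c a = ldiv c b -> a = b.
  by move=> c a b Hab; rewrite -(Hdiv c a) -(Hdiv c b) Hab.
have P_inj : forall x a b, P x a = P x b -> a = b.
  by move=> x a b /ldiv_inj /inj.
have circ_inj : forall x a b, circ mul e ldiv sqrt x a = circ mul e ldiv sqrt x b -> a = b.
  move=> x a b; rewrite !circE => /sqrt_inj /P_inj E.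
  by rewrite -(sqK a) -(sqK b) E.
pose Pinv := fun x v => ldiv x (mul (inv x) v).
have PK : forall x v, P x (Pinv x v) = v.
  by move=> x v; rewrite /P /Pinv Hdiv ldK.
have PinvK : forall x v, Pinv x (P x v) = v.
  by move=> x v; rewrite /P /Pinv Hdiv ldK.
have K : forall x y, circ mul e ldiv sqrt x (circ mul e ldiv sqrt y x) = P x y.
  move=> x y; rewrite !circE Hsq' -Po1 F3 Po1.
  by rewrite sqK.
have circ_xinv : forall x, circ mul e ldiv sqrt x (inv x) = e.
  move=> x; rewrite circE -AIP /P AIP.
  have := Afix (inv x); rewrite invK => ->.
  by rewrite ldivv -{2}(sqK e) mulr1.
have circ_inv : forall x y, circ mul e ldiv sqrt (inv x) (inv y) = inv (circ mul e ldiv sqrt x y).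
  move=> x y; rewrite !circE -AIP.
  have -> : P (inv x) (inv (mul y y)) = inv (P x (mul y y)).
    by rewrite /P (AIPd (inv x)) (AIP x).
  have E : inv (P x (mul y y)) = mul (inv (sqrt (P x (mul y y)))) (inv (sqrt (P x (mul y y)))) by rewrite -AIP Hsq'.
  by rewrite E sqK.
split; last first.
  move=> x; elim=> [|n IH] //.
  rewrite pS.
  have -> : power (circ mul e ldiv sqrt) e x n.+1 =
     circ mul e ldiv sqrt x (power (circ mul e ldiv sqrt) e x n) by [].
  rewrite IH circE pwD /P -pS -(Amore x (n + n).+1) ldK.
  rewrite -pS -(addnS n n) -addSn -pwD.
  by rewrite sqK.
split.
- split.
  + move=> x; rewrite !circE; split.
      by rewrite /P mul1 {1}/inv ldivv ld1 sqK.
    by rewrite mul1 Po1 sqK.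
  + move=> x; exists (fun z => sqrt (Pinv x (mul z z))) => z.
      by rewrite circE Hsq' PinvK sqK.
    by rewrite circE Hsq' PK sqK.
  + move=> a; exists (fun b => Pinv a (circ mul e ldiv sqrt a b)) => y.
      by rewrite K PinvK.
    by apply: (circ_inj a); rewrite K PK.
- move=> x y z; rewrite K !circE !Hsq' F3.
  done.
- move=> x y xi yi Hx Hy.
  have -> : xi = inv x by apply: (circ_inj x); rewrite Hx circ_xinv.
  have -> : yi = inv y by apply: (circ_inj y); rewrite Hy circ_xinv.
  by rewrite circ_inv circ_xinv.
Qed.
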